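(* There exist a harmonic function $h$ on $\mathbf D$ and a constant $B>0$ such that $|h(z)|\le B|z|$ for all $z\in\mathbf D$ and $\max_{1/6<r<1/3}h(re^{i\theta})\ge1$ for every $\theta\in[0,2\pi)$.
   Context: $\mathbf D$ is the open unit disc. *)

(* Defs.v *)
From Stdlib Require Import Reals.
From Coquelicot Require Import Coquelicot.
Open Scope R_scope.

(* A real-valued function on the plane is written h : R -> R -> R,
   h x y = h(x + i y). *)

Definition in_disc (x y : R) : Prop := x ^ 2 + y ^ 2 < 1.

Definition dx (f : R -> R -> R) (x y : R) : R := Derive (fun t => f t y) x.
Definition dy (f : R -> R -> R) (x y : R) : R := Derive (fun t => f x t) y.

Definition cont2 (f : R -> R -> R) (x y : R) : Prop :=
  continuous (fun p : R * R => f (fst p) (snd p)) (x, y).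

Definition harmonic_on_disc (h : R -> R -> R) : Prop :=
  forall x y, in_disc x y ->
    cont2 h x y /\
    ex_derive (fun t => h t y) x /\ ex_derive (fun t => h x t) y /\
    cont2 (dx h) x y /\ cont2 (dy h) x y /\
    ex_derive (fun t => dx h t y) x /\ ex_derive (fun t => dx h x t) y /\
    ex_derive (fun t => dy h t y) x /\ ex_derive (fun t => dy h x t) y /\
    cont2 (dx (dx h)) x y /\ cont2 (dy (dx h)) x y /\
    cont2 (dx (dy h)) x y /\ cont2 (dy (dy h)) x y /\
    dx (dx h) x y + dy (dy h) x y = 0.

(* Main.v *)
Require Import Defs.
From Stdlib Require Import Reals Lra ZArith FunctionalExtensionality.
From Coquelicot Require Import Coquelicot.
Open Scope R_scope.

Definition NN : R := 5184.
Definition ch (a : R) : R := (exp a + exp (- a)) / 2.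
Definition sh (a : R) : R := (exp a - exp (- a)) / 2.
Definition FF (a b : R) : R := ch a * cos b + cos a * ch b.
Definition Fa (a b : R) : R := sh a * cos b - sin a * ch b.
Definition Fb (a b : R) : R := - (ch a * sin b) + cos a * sh b.
Definition Faa (a b : R) : R := ch a * cos b - cos a * ch b.
Definition Fab (a b : R) : R := - (sh a * sin b) - sin a * sh b.
Definition uu (x y : R) : R := x*x*x*x - 6*x*x*y*y + y*y*y*y.
Definition vv (x y : R) : R := 4*x*x*x*y - 4*x*y*y*y.
Definition ux (x y : R) : R := 4*x*x*x - 12*x*y*y.
Definition uy (x y : R) : R := -12*x*x*y + 4*y*y*y.
Definition uxx (x y : R) : R := 12*x*x - 12*y*y.
Definition uxy (x y : R) : R := -24*x*y.
Definition hh (x y : R) : R := FF (NN * uu x y) (NN * vv x y) - 2.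

Definition E1 x y := let a := NN * uu x y in let b := NN * vv x y in
  NN * (Fa a b * ux x y - Fb a b * uy x y).
Definition E3 x y := let a := NN * uu x y in let b := NN * vv x y in
  NN * (Fa a b * uy x y + Fb a b * ux x y).
(* vx = -uy, vy = ux, vxx = -uxy, vxy = uxx *)
Definition E11 x y := let a := NN * uu x y in let b := NN * vv x y in
  NN*NN*(Faa a b * ux x y * ux x y + 2 * Fab a b * ux x y * (- uy x y) - Faa a b * uy x y * uy x y)
  + NN * (Fa a b * uxx x y - Fb a b * uxy x y).
Definition E12 x y := let a := NN * uu x y in let b := NN * vv x y in
  NN*NN*(Faa a b * uy x y * ux x y + Fab a b * (ux x y * ux x y - uy x y * uy x y) - Faa a b * ux x y * (- uy x y))
  + NN * (Fa a b * uxy x y + Fb a b * uxx x y).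
Definition E22 x y := let a := NN * uu x y in let b := NN * vv x y in
  NN*NN*(Faa a b * uy x y * uy x y + 2 * Fab a b * uy x y * ux x y - Faa a b * ux x y * ux x y)
  + NN * (- Fa a b * uxx x y + Fb a b * uxy x y).

Lemma d1 (x y : R) : is_derive (fun t => hh t y) x (E1 x y).
Proof. unfold hh, E1, FF, Fa, Fb, ch, sh, uu, vv, ux, uy. auto_derive; [easy|unfold Rminus, Rdiv; ring]. Qed.
Lemma d3 (x y : R) : is_derive (fun t => hh x t) y (E3 x y).
Proof. unfold hh, E3, FF, Fa, Fb, ch, sh, uu, vv, ux, uy. auto_derive; [easy|unfold Rminus, Rdiv; ring]. Qed.
Lemma d11 (x y : R) : is_derive (fun t => E1 t y) x (E11 x y).
Proof. unfold E1, E11, Faa, Fab, Fa, Fb, ch, sh, uu, vv, ux, uy, uxx, uxy. auto_derive; [easy|unfold Rminus, Rdiv; ring]. Qed.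
Lemma d12 (x y : R) : is_derive (fun t => E1 x t) y (E12 x y).
Proof. unfold E1, E12, Faa, Fab, Fa, Fb, ch, sh, uu, vv, ux, uy, uxx, uxy. auto_derive; [easy|unfold Rminus, Rdiv; ring]. Qed.
Lemma d21 (x y : R) : is_derive (fun t => E3 t y) x (E12 x y).
Proof. unfold E3, E12, Faa, Fab, Fa, Fb, ch, sh, uu, vv, ux, uy, uxx, uxy. auto_derive; [easy|unfold Rminus, Rdiv; ring]. Qed.
Lemma d22 (x y : R) : is_derive (fun t => E3 x t) y (E22 x y).
Proof. unfold E3, E22, Faa, Fab, Fa, Fb, ch, sh, uu, vv, ux, uy, uxx, uxy. auto_derive; [easy|unfold Rminus, Rdiv; ring]. Qed.
Lemma lap x y : E11 x y + E22 x y = 0.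
Proof. unfold E11, E22. ring. Qed.

Lemma nat_above (q : R) : 0 < q -> exists n : nat, q < INR n /\ INR n <= q + 1.
Proof.
  intros Hq. destruct (archimed q) as [H1 H2].
  assert (Hz : (0 <= up q)%Z). { apply le_IZR. lra. }
  exists (Z.to_nat (up q)). rewrite INR_IZR_INZ, Z2Nat.id by exact Hz. lra.
Qed.

Lemma exp_le_exp x y : x <= y -> exp x <= exp y.
Proof. intros [h|h]. left; apply exp_increasing; exact h. subst; lra. Qed.

Lemma ch_ge a : exp a / 2 <= ch a.
Proof. unfold ch. pose proof (exp_pos (-a)). lra. Qed.
Lemma ch_pos a : 0 < ch a.
Proof. unfold ch. pose proof (exp_pos (-a)). pose proof (exp_pos a). lra. Qed.
Lemma ch_le a : 0 <= a -> ch a <= exp a.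
Proof. intros. unfold ch. assert (exp (-a) <= exp a) by (apply exp_le_exp; lra). lra. Qed.
Lemma ch_le2 a : 0 <= a -> ch a <= (exp a + 1)/2.
Proof. intros. unfold ch. assert (exp (-a) <= exp 0) by (apply exp_le_exp; lra). rewrite exp_0 in H0. lra. Qed.

Lemma exp_big a : 0 <= a -> (1 + a/4)^4 <= exp a.
Proof.
  intros Ha. replace a with (a/4 + a/4 + a/4 + a/4) at 2 by field.
  rewrite !exp_plus. pose proof (exp_ineq1_le (a/4)).
  assert (0 <= 1 + a/4) by lra.
  assert (forall u v w z : R, 0 <= u <= v -> (u*u*u*u <= v*v*v*v)).
  { intros u v w z [h1 h2]. assert (u*u <= v*v) by nra. assert (0<=u*u) by nra. nra. }
  specialize (H1 (1+a/4) (exp (a/4)) 0 0 ltac:(lra)). simpl. nra.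
Qed.

Lemma pow4_16 w : 2 <= w -> 16 <= w^4.
Proof. intros. simpl. assert (4 <= w*w) by nra. assert (0 <= w*w) by nra. nra. Qed.

Lemma pow4_mono a w : 0 <= a <= w -> a^4 <= w^4.
Proof. intros [h1 h2]. simpl. assert (a*a <= w*w) by nra. assert (0 <= a*a) by nra. nra. Qed.

Lemma PI_gt3 : 3 < PI.
Proof. pose proof PI2_3_2. lra. Qed.

Lemma key X Y : 0 <= Y <= X -> X*X + Y*Y = 1 ->
  exists t, 4 < t < 64 /\ 3 <= FF (t*X) (t*Y).
Proof.
  intros [HY HXY] HXX. pose proof PI_gt3 as Hpi. pose proof PI_4 as Hpi4.
  destruct (Rle_lt_dec Y (1/6)) as [Hs|Hb].
  - exists 6. split; [lra|]. unfold FF.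
    assert (HX : 5/6 <= X) by nra.
    assert (Hc : 1/2 <= cos (6*Y)).
    { rewrite <- cos_PI3. apply cos_decr_1; lra. }
    assert (H1 : ch (6*Y) <= 3).
    { apply Rle_trans with (exp (6*Y)); [apply ch_le; lra|].
      apply Rle_trans with (exp 1); [apply exp_le_exp; lra| apply exp_le_3]. }
    assert (H2 : 12 <= ch (6*X)).
    { apply Rle_trans with (exp (6*X)/2); [|apply ch_ge].
      pose proof (exp_big (6*X) ltac:(lra)).
      assert ((9/4)^4 <= (1 + 6*X/4)^4) by (apply pow4_mono; lra). lra. }
    pose proof (COS_bound (6*X)) as [Hc1 _]. pose proof (ch_pos (6*Y)).
    nra.
  - assert (Hq : 0 < 4*Y/(2*PI)).
    { apply Rdiv_lt_0_compat; lra. }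
    destruct (nat_above _ Hq) as [n [Hn1 Hn2]].
    assert (Hn0 : 1 <= INR n).
    { destruct n. simpl in Hn1. lra. rewrite S_INR. pose proof (pos_INR n). lra. }
    set (t := 2*PI*INR n / Y).
    assert (HtY : t * Y = 2 * INR n * PI) by (unfold t; field; lra).
    exists t.
    assert (Ht1 : 4 < t).
    { unfold t. apply Rmult_lt_reg_r with Y; [lra|].
      replace (2 * PI * INR n / Y * Y) with (2*PI*INR n) by (field; lra).
      apply Rmult_lt_reg_r with (/(2*PI)). apply Rinv_0_lt_compat; lra.
      replace (2 * PI * INR n * / (2 * PI)) with (INR n) by (field; lra).
      unfold Rdiv in Hn1. lra. }
    assert (Ht2 : t < 64).
    { unfold t. apply Rmult_lt_reg_r with Y; [lra|].
      replace (2 * PI * INR n / Y * Y) with (2*PI*INR n) by (field; lra).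
      assert (2*PI*INR n <= 2*PI*(4*Y/(2*PI)+1)) by (apply Rmult_le_compat_l; lra).
      replace (2*PI*(4*Y/(2*PI)+1)) with (4*Y + 2*PI) in H by (field; lra).
      nra. }
    split; [lra|].
    assert (HcY : cos (t*Y) = 1).
    { rewrite HtY. replace (2 * INR n * PI) with (0 + 2*INR n*PI) by ring.
      rewrite cos_period. apply cos_0. }
    unfold FF. rewrite HcY.
    assert (Hge : t*Y <= t*X) by (apply Rmult_le_compat_l; lra).
    assert (HtY6 : 6 <= t*Y) by nra.
    destruct (Rle_lt_dec 0 (cos (t*X))) as [Hp|Hneg].
    + pose proof (ch_pos (t*Y)).
      assert (H2 : 3 <= ch (t*X)).
      { apply Rle_trans with (exp (t*X)/2); [|apply ch_ge].
        pose proof (exp_big (t*X) ltac:(lra)).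
        assert (2 <= 1 + t*X/4) by lra.
        assert (16 <= (1 + t*X/4)^4) by (apply pow4_16; lra). lra. }
      nra.
    + assert (Hfar : t*Y + PI/2 <= t*X).
      { destruct (Rle_lt_dec (t*Y + PI/2) (t*X)) as [h|h]; [exact h|].
        exfalso. assert (cos (t*X) = cos (t*X - t*Y)).
        { replace (t*X) with ((t*X - t*Y) + 2*INR n*PI) at 1 by lra.
          apply cos_period. }
        assert (0 <= cos (t*X - t*Y)) by (apply cos_ge_0; lra). lra. }
      pose proof (COS_bound (t*X)) as [Hc1 _].
      pose proof (ch_pos (t*Y)).
      assert (H3 : ch (t*Y) <= (exp (t*Y) + 1)/2) by (apply ch_le2; lra).
      assert (H4 : exp (t*Y) * (1 + PI/2) <= exp (t*X)).
      { replace (t*X) with (t*Y + (t*X - t*Y)) by ring. rewrite exp_plus.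
        apply Rmult_le_compat_l. pose proof (exp_pos (t*Y)); lra.
        pose proof (exp_ineq1_le (t*X - t*Y)). lra. }
      assert (H5 : exp (t*X)/2 <= ch (t*X)) by apply ch_ge.
      assert (H6 : 16 <= exp (t*Y)).
      { pose proof (exp_big (t*Y) ltac:(lra)).
        assert (2 <= 1 + t*Y/4) by lra.
        assert (16 <= (1 + t*Y/4)^4) by (apply pow4_16; lra). lra. }
      nra.
Qed.
Section S.
Variable p : R * R.
Lemma cc_plus (f g : R*R -> R) : continuous f p -> continuous g p -> continuous (fun q => f q + g q) p.
Proof. intros. apply (continuous_plus f g); auto. Qed.
Lemma cc_mult (f g : R*R -> R) : continuous f p -> continuous g p -> continuous (fun q => f q * g q) p.
Proof. intros. apply (continuous_mult f g); auto. Qed.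
Lemma cc_opp (f : R*R -> R) : continuous f p -> continuous (fun q => - f q) p.
Proof. intros. apply (continuous_opp f); auto. Qed.
Lemma cc_exp (f : R*R -> R) : continuous f p -> continuous (fun q => exp (f q)) p.
Proof. intros. apply (continuous_comp f exp); auto. apply (@ex_derive_continuous R_AbsRing R_NormedModule). auto_derive. auto. Qed.
Lemma cc_cos (f : R*R -> R) : continuous f p -> continuous (fun q => cos (f q)) p.
Proof. intros. apply (continuous_comp f cos); auto. apply (@ex_derive_continuous R_AbsRing R_NormedModule). auto_derive. auto. Qed.
Lemma cc_sin (f : R*R -> R) : continuous f p -> continuous (fun q => sin (f q)) p.
Proof. intros. apply (continuous_comp f sin); auto. apply (@ex_derive_continuous R_AbsRing R_NormedModule). auto_derive. auto. Qed.
Lemma cc_const (c : R) : continuous (fun _ : R*R => c) p.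
Proof. apply continuous_const. Qed.
End S.
Lemma cc_fst x y : continuous (fun q : R*R => fst q) (x,y).
Proof. apply continuous_fst. Qed.
Lemma cc_snd x y : continuous (fun q : R*R => snd q) (x,y).
Proof. apply continuous_snd. Qed.
Ltac cont_tac := repeat first [apply cc_plus | apply cc_mult | apply cc_opp | apply cc_exp | apply cc_cos | apply cc_sin | apply cc_fst | apply cc_snd | apply cc_const].

Lemma dxh : dx hh = E1.
Proof. apply functional_extensionality; intro x; apply functional_extensionality; intro y.
  unfold dx. apply is_derive_unique, d1. Qed.
Lemma dyh : dy hh = E3.
Proof. apply functional_extensionality; intro x; apply functional_extensionality; intro y.
  unfold dy. apply is_derive_unique, d3. Qed.
Lemma dxE1 : dx E1 = E11.
Proof. apply functional_extensionality; intro x; apply functional_extensionality; intro y.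
  unfold dx. apply is_derive_unique, d11. Qed.
Lemma dyE1 : dy E1 = E12.
Proof. apply functional_extensionality; intro x; apply functional_extensionality; intro y.
  unfold dy. apply is_derive_unique, d12. Qed.
Lemma dxE3 : dx E3 = E12.
Proof. apply functional_extensionality; intro x; apply functional_extensionality; intro y.
  unfold dx. apply is_derive_unique, d21. Qed.
Lemma dyE3 : dy E3 = E22.
Proof. apply functional_extensionality; intro x; apply functional_extensionality; intro y.
  unfold dy. apply is_derive_unique, d22. Qed.

Ltac ct := repeat match goal with
 | |- continuous (fun q => _ + _) _ => apply cc_plus
 | |- continuous (fun q => _ * _) _ => apply cc_mult
 | |- continuous (fun q => - _) _ => apply cc_opp
 | |- continuous (fun q => exp _) _ => apply cc_exp
 | |- continuous (fun q => cos _) _ => apply cc_cos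
 | |- continuous (fun q => sin _) _ => apply cc_sin
 | |- continuous (fun q => fst q) _ => apply cc_fst
 | |- continuous (fun q => snd q) _ => apply cc_snd
 | |- continuous fst _ => apply continuous_fst
 | |- continuous snd _ => apply continuous_snd
 | |- continuous (fun q => _) _ => apply cc_const
 end.
Ltac unf := unfold cont2, hh, E1, E3, E11, E12, E22, FF, Fa, Fb, Faa, Fab, ch, sh,
  uu, vv, ux, uy, uxx, uxy, Rminus, Rdiv; cbv beta zeta.
Lemma c_hh x y : cont2 hh x y.
Proof. unf. ct. Qed.
Lemma c_E1 x y : cont2 E1 x y.
Proof. unf. ct. Qed.
Lemma c_E3 x y : cont2 E3 x y.
Proof. unf. ct. Qed.
Lemma c_E11 x y : cont2 E11 x y.
Proof. unf. ct. Qed.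
Lemma c_E12 x y : cont2 E12 x y.
Proof. unf. ct. Qed.
Lemma c_E22 x y : cont2 E22 x y.
Proof. unf. ct. Qed.

Lemma harm : harmonic_on_disc hh.
Proof.
  intros x y _.
  rewrite dxh, dyh, dxE1, dyE1, dxE3, dyE3.
  refine (conj (c_hh x y) (conj _ (conj _ (conj (c_E1 x y) (conj (c_E3 x y)
    (conj _ (conj _ (conj _ (conj _ (conj (c_E11 x y) (conj (c_E12 x y)
    (conj (c_E12 x y) (conj (c_E22 x y) (lap x y)))))))))))))).
  - exact (ex_intro _ _ (d1 x y)).
  - exact (ex_intro _ _ (d3 x y)).
  - exact (ex_intro _ _ (d11 x y)).
  - exact (ex_intro _ _ (d12 x y)).
  - exact (ex_intro _ _ (d21 x y)).
  - exact (ex_intro _ _ (d22 x y)).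
Qed.

Lemma exp_m1 a : Rabs (exp a - 1) <= Rabs a * exp (Rabs a).
Proof.
  destruct (Rle_lt_dec 0 a) as [Ha|Ha].
  - rewrite (Rabs_right a) by lra. pose proof (exp_ineq1_le a).
    pose proof (exp_ineq1_le (-a)). pose proof (exp_pos a).
    assert (exp a * exp (-a) = 1) by (rewrite <- exp_plus; replace (a + -a) with 0 by ring; apply exp_0).
    rewrite Rabs_right by lra. nra.
  - rewrite (Rabs_left a) by lra. pose proof (exp_ineq1_le a).
    assert (exp a <= 1) by (rewrite <- exp_0; apply exp_le_exp; lra).
    assert (1 <= exp (-a)) by (rewrite <- exp_0; apply exp_le_exp; lra).
    rewrite Rabs_left1 by lra. nra.
Qed.

Lemma ch_m1 a : Rabs (ch a - 1) <= Rabs a * exp (Rabs a).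
Proof.
  pose proof (exp_m1 a). pose proof (exp_m1 (-a)). rewrite Rabs_Ropp in H0.
  replace (ch a - 1) with ((exp a - 1) / 2 + (exp (-a) - 1) / 2) by (unfold ch; field).
  eapply Rle_trans. apply Rabs_triang. unfold Rdiv. rewrite !Rabs_mult.
  rewrite (Rabs_right (/2)) by lra. lra.
Qed.

Lemma ch_abs a : ch a <= exp (Rabs a).
Proof.
  destruct (Rle_lt_dec 0 a).
  - rewrite Rabs_right by lra. apply ch_le; lra.
  - rewrite Rabs_left by lra. replace (ch a) with (ch (-a)) by (unfold ch, Rdiv; rewrite Ropp_involutive; ring).
    apply ch_le; lra.
Qed.

Lemma sin_abs_le x : Rabs (sin x) <= Rabs x.
Proof.
  assert (forall z, 0 < z -> Rabs (sin z) <= z).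
  { intros z Hz. pose proof (sin_lt_x z Hz). pose proof PI_gt3.
    destruct (Rle_lt_dec 1 z).
    - pose proof (SIN_bound z). apply Rabs_le. lra.
    - pose proof (sin_ge_0 z). apply Rabs_le. lra. }
  destruct (Rtotal_order x 0) as [h|[h|h]].
  - rewrite (Rabs_left x) by lra.
    replace (sin x) with (- sin (-x)) by (rewrite sin_neg; ring).
    rewrite Rabs_Ropp. apply H; lra.
  - subst. rewrite sin_0, Rabs_R0. lra.
  - rewrite (Rabs_right x) by lra. apply H; lra.
Qed.

Lemma cos_m1 b : Rabs (cos b - 1) <= Rabs b.
Proof.
  replace b with (2 * (b/2)) at 1 by field. rewrite cos_2a_sin.
  pose proof (sin_abs_le (b/2)). pose proof (SIN_bound (b/2)).
  replace (1 - 2 * sin (b / 2) * sin (b / 2) - 1) with (- (2 * (sin (b/2) * sin (b/2)))) by ring.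
  rewrite Rabs_Ropp, Rabs_mult, Rabs_mult. rewrite (Rabs_right 2) by lra.
  assert (Rabs (b/2) = Rabs b / 2).
  { unfold Rdiv. rewrite Rabs_mult. rewrite (Rabs_right (/2)) by lra. ring. }
  assert (Rabs (sin (b/2)) <= 1) by (apply Rabs_le; lra).
  pose proof (Rabs_pos (sin (b/2))). nra.
Qed.

Lemma FF_bound a b M : Rabs a <= M -> Rabs b <= M ->
  Rabs (FF a b - 2) <= 3 * exp M * (Rabs a + Rabs b).
Proof.
  intros Ha Hb.
  assert (Ea : exp (Rabs a) <= exp M) by (apply exp_le_exp; lra).
  assert (Eb : exp (Rabs b) <= exp M) by (apply exp_le_exp; lra).
  assert (E1m : 1 <= exp M) by (rewrite <- exp_0; apply exp_le_exp; pose proof (Rabs_pos a); lra).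
  pose proof (ch_m1 a) as H1. pose proof (ch_m1 b) as H2.
  pose proof (cos_m1 a) as H3. pose proof (cos_m1 b) as H4.
  pose proof (ch_abs b) as H5. pose proof (ch_pos b) as H6.
  pose proof (COS_bound b) as H7.
  pose proof (Rabs_pos a). pose proof (Rabs_pos b).
  replace (FF a b - 2) with ((ch a - 1) * cos b + (cos b - 1) + (cos a - 1) * ch b + (ch b - 1))
    by (unfold FF; ring).
  apply Rabs_le_between in H1. apply Rabs_le_between in H2.
  apply Rabs_le_between in H3. apply Rabs_le_between in H4.
  assert (Ka : Rabs a * exp (Rabs a) <= Rabs a * exp M) by (apply Rmult_le_compat_l; lra).
  assert (Kb : Rabs b * exp (Rabs b) <= Rabs b * exp M) by (apply Rmult_le_compat_l; lra).
  assert (T1 : Rabs ((ch a - 1) * cos b) <= Rabs a * exp M).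
  { rewrite Rabs_mult. assert (Rabs (cos b) <= 1) by (apply Rabs_le; lra).
    assert (Rabs (ch a - 1) <= Rabs a * exp (Rabs a)) by (apply Rabs_le_between; lra).
    pose proof (Rabs_pos (cos b)). pose proof (Rabs_pos (ch a - 1)). nra. }
  assert (T3 : Rabs ((cos a - 1) * ch b) <= Rabs a * exp M).
  { rewrite Rabs_mult. rewrite (Rabs_right (ch b)) by lra.
    assert (Rabs (cos a - 1) <= Rabs a) by (apply Rabs_le_between; lra).
    pose proof (Rabs_pos (cos a - 1)). nra. }
  apply Rabs_le_between in T1. apply Rabs_le_between in T3.
  apply Rabs_le. nra.
Qed.

Lemma uv_sq x y : uu x y * uu x y + vv x y * vv x y = (x*x + y*y)^4.
Proof. unfold uu, vv. ring. Qed.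

Lemma small_bound x y : x ^ 2 + y ^ 2 < 1 ->
  Rabs (uu x y) <= sqrt (x ^ 2 + y ^ 2) /\ Rabs (vv x y) <= sqrt (x ^ 2 + y ^ 2).
Proof.
  intros Hq. set (q := x ^ 2 + y ^ 2).
  assert (Hq0 : 0 <= q) by (unfold q; nra).
  assert (Hq1 : q < 1) by (unfold q; lra).
  assert (E : uu x y * uu x y + vv x y * vv x y = q^4) by (rewrite uv_sq; unfold q; ring).
  clearbody q. revert E. set (s := sqrt q). assert (Hs : s * s = q) by (apply sqrt_sqrt; lra).
  assert (Hs0 : 0 <= s) by apply sqrt_pos.
  clearbody s.
  assert (Hs1 : s <= 1) by (destruct (Rle_lt_dec s 1) as [h|h]; [exact h| nra]).
  assert (Hq2 : q * q <= s).
  { rewrite <- Hs. assert (s*s <= 1) by nra. assert (0 <= s*s*s) by nra. nra. }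
  intro E. assert (q^4 = (q*q)*(q*q)) by ring.
  assert (Rabs (uu x y) <= q * q).
  { apply Rabs_le. assert (0 <= q*q) by nra. nra. }
  assert (Rabs (vv x y) <= q * q).
  { apply Rabs_le. assert (0 <= q*q) by nra. nra. }
  split; lra.
Qed.

Lemma bound_h x y : in_disc x y -> Rabs (hh x y) <= (6 * NN * exp NN) * sqrt (x ^ 2 + y ^ 2).
Proof.
  unfold in_disc. intros Hd. destruct (small_bound x y Hd) as [Hu Hv].
  assert (Hs1 : sqrt (x^2 + y^2) <= 1).
  { rewrite <- sqrt_1. apply sqrt_le_1_alt. lra. }
  assert (HN : 0 < NN) by (unfold NN; lra).
  assert (Ha : Rabs (NN * uu x y) <= NN).
  { rewrite Rabs_mult, (Rabs_right NN) by lra. nra. }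
  assert (Hb : Rabs (NN * vv x y) <= NN).
  { rewrite Rabs_mult, (Rabs_right NN) by lra. nra. }
  pose proof (FF_bound _ _ _ Ha Hb) as H. unfold hh.
  rewrite !Rabs_mult, (Rabs_right NN) in H by lra.
  pose proof (exp_pos NN). pose proof (sqrt_pos (x^2+y^2)).
  eapply Rle_trans; [exact H|].
  assert (Rabs (uu x y) + Rabs (vv x y) <= 2 * sqrt (x ^ 2 + y ^ 2)) by lra.
  assert (0 <= 3 * exp NN * NN) by nra.
  replace (3 * exp NN * (NN * Rabs (uu x y) + NN * Rabs (vv x y))) with
    ((3 * exp NN * NN) * (Rabs (uu x y) + Rabs (vv x y))) by ring.
  nra.
Qed.

Lemma FF_negl a b : FF (-a) b = FF a b.
Proof. unfold FF, ch. rewrite cos_neg, Ropp_involutive. unfold Rdiv; ring. Qed.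
Lemma FF_negr a b : FF a (-b) = FF a b.
Proof. unfold FF, ch. rewrite cos_neg, Ropp_involutive. unfold Rdiv; ring. Qed.
Lemma FF_sym a b : FF a b = FF b a.
Proof. unfold FF. ring. Qed.

Lemma FF_abs t C S : FF (t*C) (t*S) = FF (t * Rabs C) (t * Rabs S).
Proof.
  destruct (Rcase_abs C) as [hc|hc]; destruct (Rcase_abs S) as [hs|hs].
  - rewrite (Rabs_left C), (Rabs_left S) by lra.
    replace (t * - C) with (- (t*C)) by ring. replace (t * - S) with (- (t*S)) by ring.
    rewrite FF_negl, FF_negr. reflexivity.
  - rewrite (Rabs_left C), (Rabs_right S) by lra.
    replace (t * - C) with (- (t*C)) by ring. rewrite FF_negl. reflexivity.
  - rewrite (Rabs_right C), (Rabs_left S) by lra.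
    replace (t * - S) with (- (t*S)) by ring. rewrite FF_negr. reflexivity.
  - rewrite (Rabs_right C), (Rabs_right S) by lra. reflexivity.
Qed.

Lemma key2 C S : C*C + S*S = 1 -> exists t, 4 < t < 64 /\ 3 <= FF (t*C) (t*S).
Proof.
  intros H.
  assert (HC : Rabs C * Rabs C = C * C) by (rewrite <- Rabs_mult; apply Rabs_right; nra).
  assert (HS : Rabs S * Rabs S = S * S) by (rewrite <- Rabs_mult; apply Rabs_right; nra).
  pose proof (Rabs_pos C). pose proof (Rabs_pos S).
  destruct (Rle_lt_dec (Rabs S) (Rabs C)).
  - destruct (key (Rabs C) (Rabs S)) as [t [Ht Hf]]; [lra|lra|].
    exists t. rewrite FF_abs. auto.
  - destruct (key (Rabs S) (Rabs C)) as [t [Ht Hf]]; [lra|lra|].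
    exists t. rewrite FF_abs, FF_sym. auto.
Qed.

Lemma uu_polar r th : uu (r * cos th) (r * sin th) = r*r*r*r * cos (4*th).
Proof.
  replace (4*th) with (2*(2*th)) by ring. rewrite cos_2a, cos_2a, sin_2a.
  unfold uu. ring.
Qed.
Lemma vv_polar r th : vv (r * cos th) (r * sin th) = r*r*r*r * sin (4*th).
Proof.
  replace (4*th) with (2*(2*th)) by ring. rewrite sin_2a, cos_2a, sin_2a.
  unfold vv. ring.
Qed.

Theorem lemma10 :
  exists (h : R -> R -> R) (B : R),
    harmonic_on_disc h /\ 0 < B /\
    (forall x y, in_disc x y -> Rabs (h x y) <= B * sqrt (x ^ 2 + y ^ 2)) /\
    (forall theta, 0 <= theta < 2 * PI ->
       exists r, 1 / 6 < r < 1 / 3 /\ 1 <= h (r * cos theta) (r * sin theta)).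
Proof.
  exists hh, (6 * NN * exp NN).
  split; [exact harm|]. split.
  { pose proof (exp_pos NN). unfold NN in *. nra. }
  split; [exact bound_h|].
  intros th _.
  assert (HCS : cos (4*th) * cos (4*th) + sin (4*th) * sin (4*th) = 1).
  { pose proof (sin2_cos2 (4*th)). unfold Rsqr in H. lra. }
  destruct (key2 _ _ HCS) as [t [[Ht1 Ht2] Hf]].
  assert (HN : 0 < NN) by (unfold NN; lra).
  set (r := sqrt (sqrt (t / NN))).
  assert (Hp : 0 < t / NN) by (apply Rdiv_lt_0_compat; lra).
  assert (Hr0 : 0 <= r) by apply sqrt_pos.
  assert (Hr4 : r*r*r*r = t / NN).
  { replace (r*r*r*r) with ((r*r)*(r*r)) by ring.
    unfold r. rewrite sqrt_sqrt by apply sqrt_pos. apply sqrt_sqrt. lra. }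
  exists r. split.
  - assert (Hl : 4 / NN < t / NN) by (unfold Rdiv; apply Rmult_lt_compat_r; [apply Rinv_0_lt_compat|]; lra).
    assert (Hu : t / NN < 64 / NN) by (unfold Rdiv; apply Rmult_lt_compat_r; [apply Rinv_0_lt_compat|]; lra).
    unfold NN in Hl, Hu.
    split.
    + destruct (Rle_lt_dec r (1/6)) as [h|h]; [|exact h]. exfalso.
      pose proof (pow4_mono r (1/6) ltac:(lra)).
      assert (r^4 = t/NN) by (rewrite <- Hr4; ring). unfold NN in *.
      assert ((1/6)^4 = 1/1296) by field. lra.
    + destruct (Rle_lt_dec (1/3) r) as [h|h]; [|exact h]. exfalso.
      pose proof (pow4_mono (1/3) r ltac:(lra)).
      assert (r^4 = t/NN) by (rewrite <- Hr4; ring). unfold NN in *.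
      assert ((1/3)^4 = 1/81) by field. lra.
  - unfold hh. rewrite uu_polar, vv_polar, Hr4.
    replace (NN * (t / NN * cos (4 * th))) with (t * cos (4*th)) by (field; lra).
    replace (NN * (t / NN * sin (4 * th))) with (t * sin (4*th)) by (field; lra).
    lra.
Qed.
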